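(* Suppose $p=1$, or $p>1$ and $d_{\mathcal Y}(y_1,y_2)\le\max\{d_{\mathcal Y}(y_1,y_0),d_{\mathcal Y}(y_0,y_2)\}$ for all $y_1,y_2\in\mathcal Y$. Let $0\le m\le n\le l$ with $n\ge1$ and let $([m],v,e),([n],w,f)$ be graphs with attributes in $\mathcal X,\mathcal Y$. Extend $([m],v,e)$ to $([l],v,e)$ by $v_i=x_*$ for $m+1\le i\le l$ and $e_{ii'}=y_0$ whenever $\max\{i,i'\}\ge m+1$, and extend $([n],w,f)$ to $([l],w,f)$ by $w_i=x'_*$ for $n+1\le i\le l$ and $f_{ii'}=y_0$ whenever $\max\{i,i'\}\ge n+1$. Then $$d_{\mathbb G,R_2}(([m],v,e),([n],w,f))\le\Big(D_l\big(([l],v,e),([l],w,f)\big)^p+C_{\mathcal Y}^p\frac{n-m}{n}\Big)^{1/p}.$$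
   Context: $(\mathcal X,d_{\mathcal X})$, $(\mathcal Y,d_{\mathcal Y})$ are pseudometric spaces with $\mathrm{diam}(\mathcal X)\le C_{\mathcal X}$, $\mathrm{diam}(\mathcal Y)\le C_{\mathcal Y}$, $y_0\in\mathcal Y$ a distinguished ''no edge'' element, $p\ge1$, $C_2^p\ge C_{\mathcal X}^p+C_{\mathcal Y}^p$. Two new points $x_*,x'_*$ are adjoined to $\mathcal X$ with $d_{\mathcal X}(x_*,x)^p=d_{\mathcal X}(x,x_* )^p=C_2^p-C_{\mathcal Y}^p$ and $d_{\mathcal X}(x'_*,x)=d_{\mathcal X}(x,x'_* )=d_{\mathcal X}(x_*,x'_* )=d_{\mathcal X}(x'_*,x_* )=C_2$ for all $x\in\mathcal X$ (zero self-distances). A graph $([n],v,e)$ has vertex map into $\mathcal X\cup\{x_*,x'_*\}$ and symmetric $e:[n]^2\to\mathcal Y$ with $e_{ii}=y_0$; $S_n$ is the set of permutations of $[n]=\{1,\dots,n\}$. GOSPA2 distance (order $p$, penalty $C_2$; graphs with attributes in $\mathcal X$): for $n\ge\max\{m,1\}$, with $0/0:=0$, $$d_{\mathbb G,R_2}(([m],v,e),([n],w,f))=n^{-1/p}\min_{\pi\in S_n}\Big[(n-m)C_2^p+\sum_{i\in[m]}d_{\mathcal X}(v_i,w_{\pi(i)})^p+\frac{1}{2(n-1)}\Big(\sum_{(i,i')\in[m]^2}d_{\mathcal Y}(e_{ii'},f_{\pi(i)\pi(i')})^p+\sum_{(i,i')\in[n]^2\setminus[m]^2}d_{\mathcal Y}(y_0,f_{\pi(i)\pi(i')})^p\Big)\Big]^{1/p}.$$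 For two graphs of equal size $N\ge1$ (attributes in the extended spaces), $$D_N\big(([N],a,g),([N],b,h)\big)=N^{-1/p}\min_{\pi\in S_N}\Big[\sum_{i\in[N]}d_{\mathcal X}(a_i,b_{\pi(i)})^p+\frac{1}{2(N-1)}\sum_{(i,i')\in[N]^2}d_{\mathcal Y}(g_{ii'},h_{\pi(i)\pi(i')})^p\Big]^{1/p}.$$ *)

(* Defs.v *)
From HB Require Import structures.
From mathcomp Require Import all_boot all_order all_algebra all_fingroup.
From mathcomp Require Import all_classical all_reals all_analysis.
Set Implicit Arguments. Unset Strict Implicit. Unset Printing Implicit Defensive.
Import Order.TTheory GRing.Theory Num.Theory.
Local Open Scope ring_scope.

Record pseudometric (R : realType) (T : Type) (d : T -> T -> R) : Prop := {
  pm_ge0 : forall x y, 0 <= d x y;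
  pm_refl : forall x, d x x = 0;
  pm_sym : forall x y, d x y = d y x;
  pm_tri : forall x y z, d x z <= d x y + d y z }.

Inductive xext (X : Type) := XIn of X | XStar | XStar'.
Arguments XStar {X}.
Arguments XStar' {X}.

Definition dXext (R : realType) (X : Type) (dX : X -> X -> R) (p C2 CY : R)
    (a b : xext X) : R :=
  match a, b with
  | XIn x, XIn x' => dX x x'
  | XStar, XStar => 0
  | XStar', XStar' => 0
  | XStar, XIn _ => (C2 `^ p - CY `^ p) `^ p^-1
  | XIn _, XStar => (C2 `^ p - CY `^ p) `^ p^-1
  | _, _ => C2
  end.

(* Graphs on [k] = {0,...,k-1} are encoded by vertex maps nat -> X and edge maps
   nat -> nat -> Y; only values at indices < k matter. *)

(* GOSPA2 distance d_{G,R_2}(([m],v,e),([n],w,f)), for n >= max(m,1). *)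
Definition gospa2 (R : realType) (X Y : Type) (dX : X -> X -> R) (dY : Y -> Y -> R)
    (y0 : Y) (p C2 : R) (m n : nat) (v : nat -> X) (e : nat -> nat -> Y)
    (w : nat -> X) (f : nat -> nat -> Y) : R :=
  let F := fun s : 'S_n =>
    (n - m)%:R * C2 `^ p
    + \sum_(i < n | (i < m)%N) dX (v i) (w (s i)) `^ p
    + (2 * (n - 1)%:R)^-1 *
      (\sum_(i < n) \sum_(i' < n | (i < m)%N && (i' < m)%N)
          dY (e i i') (f (s i) (s i')) `^ p
       + \sum_(i < n) \sum_(i' < n | ~~ ((i < m)%N && (i' < m)%N))
          dY y0 (f (s i) (s i')) `^ p) in
  n%:R `^ (- p^-1) * (\big[Num.min/F 1%g]_(s : 'S_n) F s) `^ p^-1.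

Definition Dgraph (R : realType) (A Y : Type) (dA : A -> A -> R) (dY : Y -> Y -> R)
    (p : R) (N : nat) (a : nat -> A) (g : nat -> nat -> Y)
    (b : nat -> A) (h : nat -> nat -> Y) : R :=
  let F := fun s : 'S_N =>
    \sum_(i < N) dA (a i) (b (s i)) `^ p
    + (2 * (N - 1)%:R)^-1 *
      \sum_(i < N) \sum_(i' < N) dY (g i i') (h (s i) (s i')) `^ p in
  N%:R `^ (- p^-1) * (\big[Num.min/F 1%g]_(s : 'S_N) F s) `^ p^-1.

Definition ext_v (X : Type) (k : nat) (v : nat -> X) (star : xext X) : nat -> xext X :=
  fun i => if (i < k)%N then XIn (v i) else star.
Definition ext_e (Y : Type) (k : nat) (y0 : Y) (e : nat -> nat -> Y) : nat -> nat -> Y :=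
  fun i i' => if (i < k)%N && (i' < k)%N then e i i' else y0.

(* Main.v *)
Require Import Defs.
From HB Require Import structures.
From mathcomp Require Import all_boot all_order all_algebra all_fingroup.
From mathcomp Require Import all_classical all_reals all_analysis.
Import Order.TTheory GRing.Theory Num.Theory.
Local Open Scope ring_scope.
From mathcomp Require Import ring lra.
Lemma card_sum (l : nat) (P : pred 'I_l) :
  #|[pred i : 'I_l | P i]| = (\sum_(i < l) (if P i then 1 else 0))%N.
Proof. by rewrite -sum1_card big_mkcond. Qed.

Lemma card_BC (l n : nat) (s : 'S_l) :
  #|[pred i : 'I_l | (i < n)%N && (n <= s i)%N]| =
  #|[pred i : 'I_l | (n <= i)%N && (s i < n)%N]|.
Proof.
have hX : (\sum_(i < l) ((i < n)%N : nat) = \sum_(i < l) ((s i < n)%N : nat))%N.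
  exact: (reindex_inj (@perm_inj _ s)).
rewrite !card_sum.
have e1 : (\sum_(i < l) ((i < n)%N : nat) =
   \sum_(i < l) (if (i < n)%N && (n <= s i)%N then 1 else 0) +
   \sum_(i < l) (if (i < n)%N && (s i < n)%N then 1 else 0))%N.
  rewrite -big_split; apply: eq_bigr => i _ /=.
  by case: (ltnP i n); case: (ltnP (s i) n).
have e2 : (\sum_(i < l) ((s i < n)%N : nat) =
   \sum_(i < l) (if (n <= i)%N && (s i < n)%N then 1 else 0) +
   \sum_(i < l) (if (i < n)%N && (s i < n)%N then 1 else 0))%N.
  rewrite -big_split; apply: eq_bigr => i _ /=.
  by case: (ltnP i n); case: (ltnP (s i) n).
by apply/eqP; rewrite -(eqn_add2r (\sum_(i < l) (if (i < n)%N && (s i < n)%N then 1 else 0))%N) -e1 hX e2.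
Qed.
Lemma induce_perm (n l : nat) (s : 'S_l) (le_nl : (n <= l)%N) :
  exists (rho : 'I_n -> 'I_l) (sg : 'S_n),
  [/\ injective rho, (forall i, val (sg i) = val (s (rho i))),
      (forall i : 'I_n, (s (widen_ord le_nl i) < n)%N -> rho i = widen_ord le_nl i) &
      (forall i : 'I_n, ~~ (s (widen_ord le_nl i) < n)%N -> (n <= rho i)%N)].
Proof.
pose sB := enum [pred i : 'I_l | (i < n)%N && (n <= s i)%N].
pose sC := enum [pred i : 'I_l | (n <= i)%N && (s i < n)%N].
have hsz : size sB = size sC by rewrite -!cardE card_BC.
pose tau (j : 'I_l) := nth j sC (index j sB).
have tauC : forall j : 'I_l, j \in sB -> tau j \in sC.
  by move=> j jB; apply: mem_nth; rewrite -hsz index_mem.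
have inB : forall i : 'I_n, ~~ (s (widen_ord le_nl i) < n)%N -> widen_ord le_nl i \in sB.
  by move=> i h; rewrite mem_enum inE /= ltn_ord /= leqNgt.
pose rho (i : 'I_n) := if (s (widen_ord le_nl i) < n)%N then widen_ord le_nl i
   else tau (widen_ord le_nl i).
have rhoP : forall i, (s (rho i) < n)%N.
  move=> x; rewrite /rho; case: ifPn => // h.
  by move: (tauC _ (inB _ h)); rewrite mem_enum inE => /andP[].
have rhoG : forall i : 'I_n, ~~ (s (widen_ord le_nl i) < n)%N -> (n <= rho i)%N.
  move=> i h; rewrite /rho (negbTE h).
  by move: (tauC _ (inB _ h)); rewrite mem_enum inE => /andP[].
have rho_inj : injective rho.
  move=> i i'; case hi: (s (widen_ord le_nl i) < n)%N;
    case hi': (s (widen_ord le_nl i') < n)%N.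
  - by rewrite /rho hi hi' => /(congr1 val) /= h; apply: val_inj.
  - move=> e; have := rhoG i' (negbT hi'); rewrite -e /rho hi /=.
    by rewrite leqNgt ltn_ord.
  - move=> e; have := rhoG i (negbT hi); rewrite e /rho hi' /=.
    by rewrite leqNgt ltn_ord.
  - rewrite /rho hi hi' /tau.
    have hB := inB _ (negbT hi); have hB' := inB _ (negbT hi').
    have k1 : (index (widen_ord le_nl i) sB < size sC)%N by rewrite -hsz index_mem.
    have k2 : (index (widen_ord le_nl i') sB < size sC)%N by rewrite -hsz index_mem.
    rewrite (set_nth_default (widen_ord le_nl i') _ k1) => /eqP.
    rewrite nth_uniq ?enum_uniq // => /eqP /(@index_inj _ (widen_ord le_nl i) sB _ _ hB hB') /(congr1 val) /= h.
    exact: val_inj.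
pose f (i : 'I_n) : 'I_n := Ordinal (rhoP i).
have f_inj : injective f.
  move=> i i' /(congr1 val) /= h; apply: rho_inj; apply: (@perm_inj _ s).
  exact: val_inj.
exists rho, (perm f_inj); split => //.
- by move=> i; rewrite permE.
- by move=> i h; rewrite /rho h.
Qed.
Lemma sum_sub_le (R : realType) (T : finType) (F : T -> R) (A : {pred T}) :
  (forall x, 0 <= F x) -> \sum_(x in A) F x <= \sum_x F x.
Proof.
move=> F0; rewrite big_mkcond /=; apply: ler_sum => x _.
by case: ifP => _ //; apply: F0.
Qed.

Lemma sum_two_images (R : realType) (T T1 T2 : finType) (F : T -> R)
  (g1 : T1 -> T) (g2 : T2 -> T) (P1 : pred T1) :
  (forall x, 0 <= F x) -> injective g1 -> injective g2 ->
  (forall y1 y2, P1 y1 -> g1 y1 != g2 y2) ->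
  \sum_(y | P1 y) F (g1 y) + \sum_y F (g2 y) <= \sum_x F x.
Proof.
move=> F0 i1 i2 dis.
have h1 : \sum_(y | P1 y) F (g1 y) = \sum_(x in g1 @: [set y | P1 y]) F x.
  rewrite big_imset /=; last by move=> ? ? _ _; apply: i1.
  by apply: eq_bigl => y; rewrite inE.
have h2 : \sum_y F (g2 y) = \sum_(x in g2 @: [set: T2]) F x.
  rewrite big_imset /=; last by move=> ? ? _ _; apply: i2.
  by apply: eq_bigl => y; rewrite inE.
rewrite h1 h2 -bigU /=; last first.
  rewrite finset.disjoints_subset; apply/fintype.subsetP => x /imsetP [y1]; rewrite inE => Py1 ->.
  rewrite inE /=; apply/imsetP => [[y2 _ e]].
  by move: (dis _ y2 Py1); rewrite e eqxx.
exact: sum_sub_le.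
Qed.
Lemma edge_charge (R : realType) (n l : nat) (F : nat -> nat -> R) (Q : nat -> bool)
  (rn : nat -> nat) (rho : 'I_n -> 'I_l) (le_nl : (n <= l)%N) :
  (forall k k', 0 <= F k k') -> injective rho -> (forall i : 'I_n, rn i = rho i) ->
  (forall j, (j < n)%N -> Q (rn j)) ->
  \sum_(k < n) \sum_(k' < n) (if Q k && Q k' then 0 else F k k')
  + \sum_(k < n) \sum_(k' < n) F (rn k) (rn k')
  <= \sum_(k < l) \sum_(k' < l) F k k'.
Proof.
move=> F0 rinj rnE Qr.
rewrite !pair_big /=.
rewrite (bigID (fun p : 'I_n * 'I_n => Q p.1 && Q p.2)) /=.
rewrite big1 ?add0r; last by move=> p ->.
rewrite (eq_bigr (fun p : 'I_n * 'I_n => F (widen_ord le_nl p.1) (widen_ord le_nl p.2))); last first.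
  by move=> p /negbTE ->.
rewrite [X in _ + X](eq_bigr (fun p : 'I_n * 'I_n => F (rho p.1) (rho p.2))); last first.
  by move=> p _; rewrite !rnE.
apply: (@sum_two_images R _ _ _ (fun x : 'I_l * 'I_l => F x.1 x.2)
   (fun p : 'I_n * 'I_n => (widen_ord le_nl p.1, widen_ord le_nl p.2))
   (fun p : 'I_n * 'I_n => (rho p.1, rho p.2))
   (fun p : 'I_n * 'I_n => ~~ (Q p.1 && Q p.2))).
- by move=> x; apply: F0.
- move=> [a b] [c d] /= [] e1 e2; congr (_, _); apply: val_inj.
    exact: e1.
  exact: e2.
- by move=> [a b] [c d] /= [] /rinj -> /rinj ->.
- move=> [a b] [c d] /= H; apply/negP => /eqP [] e1 e2.
  have h1 : (a : nat) = rn c by rewrite rnE -e1.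
  have h2 : (b : nat) = rn d by rewrite rnE -e2.
  by move: H; rewrite h1 h2 !Qr.
Qed.

Lemma alg_ineq (R : realType) (n l : nat) (V E V' E' C K : R) :
  (1 <= n)%N -> (n <= l)%N -> V <= n%:R * (C - K) -> 0 <= E ->
  E <= n%:R * (n - 1)%:R * K -> E <= E' -> V + (l - n)%:R * C <= V' -> 0 <= K ->
  l%:R * (V + (2 * (n - 1)%:R)^-1 * E) <= n%:R * (V' + (2 * (l - 1)%:R)^-1 * E').
Proof.
move=> n1 nl hV E0 hE hEE hV' K0.
rewrite -subr_ge0.
have E'0 : 0 <= E' by apply: le_trans hEE.
case: n n1 nl hV hE hV' => [//|[|n]] _ nl hV hE hV'.
  rewrite subnn mulr0 invr0 mul0r addr0.
  have b0 : 0 <= (2 * (l - 1)%:R : R)^-1 by rewrite invr_ge0 mulr_ge0 // ler0n.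
  have hl : (l%:R : R) = 1 + (l - 1)%:R.
    have hl' : l = (1 + (l - 1))%N by rewrite subnKC.
    by rewrite {1}hl' natrD.
  rewrite hl mul1r.
  have : (l - 1)%:R * V <= (l - 1)%:R * C.
    apply: ler_wpM2l; first by rewrite ler0n.
    by apply: (le_trans hV); rewrite mul1r; lra.
  move: hV'; rewrite -/(1%N) => hV'.
  have : 0 <= (2 * (l - 1)%:R : R)^-1 * E' by apply: mulr_ge0.
  lra.
set N := (n.+2)%:R : R.
have l2 : (2 <= l)%N by apply: leq_trans nl.
have eN : ((n.+2 - 1)%:R : R) = N - 1 by rewrite natrB.
have eL : ((l - 1)%:R : R) = l%:R - 1 by rewrite natrB // (leq_trans _ l2).
have eLN : ((l - n.+2)%:R : R) = l%:R - N by rewrite natrB.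
set L := (l%:R : R) in eL eLN *.
rewrite eN eL; rewrite eLN in hV'; rewrite eN in hE.
have N2 : (2 : R) <= N by rewrite /N ler_nat.
have LN : N <= L by rewrite /N /L ler_nat.
have LN1 : 0 <= (L - N) * (L - N - 1).
  have [e|ne] := eqVneq L N; first by rewrite e subrr mul0r.
  apply: mulr_ge0; first lra.
  have hlt : (n.+2 < l)%N.
    rewrite ltn_neqAle nl andbT; apply/eqP => e; move: ne; by rewrite /L /N -e eqxx.
  have : N + 1 <= L by rewrite /N /L natr1 ler_nat.
  lra.
set a := (2 * (N - 1))^-1.
set b := (2 * (L - 1))^-1.
have a1 : a * (N - 1) = 2^-1.
  rewrite /a invfM -mulrA mulVf ?mulr1 //; lra.
have b1 : b * (L - 1) = 2^-1.
  rewrite /b invfM -mulrA mulVf ?mulr1 //; lra.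
have a0 : 0 <= a by rewrite /a invr_ge0; lra.
have b0 : 0 <= b by rewrite /b invr_ge0; lra.
have ab : b <= a.
  rewrite /a /b lef_pV2 ?posrE; lra.
have hb : N - L / 2 <= N * (N - 1) * b.
  have : (N - L / 2) * (2 * (L - 1)) <= N * (N - 1) by nra.
  rewrite /b -ler_pdivlMr; last lra.
  by [].
have key : N * (V' + b * E') - L * (V + a * E) =
  N * (V' - V - (L - N) * C) + N * b * (E' - E) + (L - N) * (N * (C - K) - V)
  + (L * a - N * b) * (N * (N - 1) * K - E)
  + K * (N * (L - N) - (L * a - N * b) * N * (N - 1)) by ring.
rewrite key.
have t5 : 0 <= N * (L - N) - (L * a - N * b) * N * (N - 1).
  have -> : (L * a - N * b) * N * (N - 1) = L * N * (a * (N - 1)) - N * (N * (N - 1) * b) by ring.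
  rewrite a1.
  have : N * (N - L / 2) <= N * (N * (N - 1) * b) by apply: ler_wpM2l; lra.
  lra.
have t4 : 0 <= L * a - N * b.
  have : N * b <= N * a by apply: ler_wpM2l; lra.
  have : N * a <= L * a by apply: ler_wpM2r.
  lra.
rewrite addr_ge0 // ?mulr_ge0 //; try lra.
rewrite addr_ge0 // ?mulr_ge0 //; try lra.
rewrite addr_ge0 // ?mulr_ge0 //; try lra.
rewrite addr_ge0 // ?mulr_ge0 //; lra.
Qed.

Lemma powRV' (R : realType) (x r : R) : 0 < x -> (x^-1) `^ r = (x `^ r)^-1.
Proof.
move=> x0; have h : x^-1 `^ r * x `^ r = 1.
  by rewrite -powRM ?invr_ge0 ?ltW // mulVf ?gt_eqF // powR1.
have nz : x `^ r != 0 by rewrite gt_eqF // powR_gt0.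
by rewrite -[LHS]mulr1 -(mulfV nz) mulrA h mul1r.
Qed.

Lemma powRK1 (R : realType) (x p : R) : 0 <= x -> p != 0 -> (x `^ p^-1) `^ p = x.
Proof. by move=> x0 p0; rewrite -powRrM mulVf // powRr1. Qed.

Lemma powR_mono (R : realType) (x y p : R) : 0 <= p -> 0 <= x -> x <= y -> x `^ p <= y `^ p.
Proof.
move=> p0 x0 xy; apply: (ge0_ler_powR p0) => //; rewrite nnegrE //.
exact: le_trans xy.
Qed.
Arguments powR_mono {R x y p}.

Lemma final_pow (R : realType) (n l : nat) (p d Kp : R) (G : 'S_n -> R) (F : 'S_l -> R) :
  (0 < n)%N -> (n <= l)%N -> 1 <= p -> (forall s, 0 <= G s) -> (forall t, 0 <= F t) ->
  0 <= d * Kp ->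
  (forall t, exists s, l%:R * (G s - d * Kp) <= n%:R * F t) ->
  n%:R `^ (- p^-1) * (\big[Num.min/G 1%g]_s G s) `^ p^-1 <=
  ((l%:R `^ (- p^-1) * (\big[Num.min/F 1%g]_s F s) `^ p^-1) `^ p
    + Kp * (d / n%:R)) `^ p^-1.
Proof.
move=> n0 nl p1 G0 F0 dK0 H.
have p0 : p != 0 by apply/eqP => e; move: p1; rewrite e; lra.
have l0 : (0 < l)%N by apply: leq_trans nl.
have N0 : (0 : R) < n%:R by rewrite ltr0n.
have L0 : (0 : R) < l%:R by rewrite ltr0n.
set M := \big[Num.min/G 1%g]_s G s.
set Ml := \big[Num.min/F 1%g]_s F s.
have M0 : 0 <= M by apply: le_bigmin => // s _; apply: G0.
have Ml0 : 0 <= Ml by apply: le_bigmin => // s _; apply: F0.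
have hM : (M - d * Kp) * l%:R / n%:R <= Ml.
  have hh : forall t, (M - d * Kp) * l%:R / n%:R <= F t.
    move=> t; have [s hs] := H t.
    rewrite ler_pdivrMr //.
    apply: le_trans _ (_ : n%:R * F t <= _); last by rewrite mulrC.
    apply: le_trans hs; rewrite mulrC; apply: ler_wpM2l; first by apply: ltW.
    rewrite lerD2r; exact: bigmin_le.
  by apply: le_bigmin => // t _; apply: hh.
have eL : n%:R `^ (- p^-1) * M `^ p^-1 = (M / n%:R) `^ p^-1.
  have ni : (0:R) <= n%:R^-1 by rewrite invr_ge0 ltW.
  by rewrite powRN (powRM _ M0 ni) powRV' // mulrC.
have eR : (l%:R `^ (- p^-1) * Ml `^ p^-1) `^ p = Ml / l%:R.
  rewrite powRM ?powR_ge0 // powRK1 // -powRrM mulNr mulVf //.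
  by rewrite powR_inv1 ?ltW // mulrC.
rewrite eL eR; apply: powR_mono; first by rewrite invr_ge0; lra.
  by rewrite divr_ge0 // ltW.
have h1 : (M - d * Kp) / n%:R <= Ml / l%:R.
  rewrite ler_pdivlMr // mulrAC; exact: hM.
have h2 : M / n%:R = (M - d * Kp) / n%:R + Kp * (d / n%:R) by field; rewrite gt_eqF.
rewrite h2; lra.
Qed.
Lemma tri_pow (R : realType) (Y : Type) (dY : Y -> Y -> R) (y0 : Y) (p : R) :
  pseudometric dY -> 1 <= p ->
  (p = 1 \/ (1 < p /\ forall y1 y2, dY y1 y2 <= Num.max (dY y1 y0) (dY y0 y2))) ->
  forall y1 y2, dY y1 y2 `^ p <= dY y1 y0 `^ p + dY y0 y2 `^ p.
Proof.
move=> pm p1 [->|[_ hmax]] y1 y2.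
  by rewrite !powRr1 ?(pm_ge0 pm) //; apply: pm_tri.
have pp : 0 <= p by lra.
have := hmax y1 y2; rewrite le_max => /orP [h|h].
  apply: le_trans (powR_mono pp (pm_ge0 pm _ _) h) _.
  by rewrite lerDl powR_ge0.
apply: le_trans (powR_mono pp (pm_ge0 pm _ _) h) _.
by rewrite lerDr powR_ge0.
Qed.

Definition Gfun (R : realType) (X Y : Type) (dX : X -> X -> R) (dY : Y -> Y -> R)
    (y0 : Y) (p C2 : R) (m n : nat) (v : nat -> X) (e : nat -> nat -> Y)
    (w : nat -> X) (f : nat -> nat -> Y) (s : 'S_n) : R :=
    (n - m)%:R * C2 `^ p
    + \sum_(i < n | (i < m)%N) dX (v i) (w (s i)) `^ p
    + (2 * (n - 1)%:R)^-1 *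
      (\sum_(i < n) \sum_(i' < n | (i < m)%N && (i' < m)%N)
          dY (e i i') (f (s i) (s i')) `^ p
       + \sum_(i < n) \sum_(i' < n | ~~ ((i < m)%N && (i' < m)%N))
          dY y0 (f (s i) (s i')) `^ p).

Definition Ffun (R : realType) (A Y : Type) (dA : A -> A -> R) (dY : Y -> Y -> R)
    (p : R) (N : nat) (a : nat -> A) (g : nat -> nat -> Y)
    (b : nat -> A) (h : nat -> nat -> Y) (s : 'S_N) : R :=
    \sum_(i < N) dA (a i) (b (s i)) `^ p
    + (2 * (N - 1)%:R)^-1 *
      \sum_(i < N) \sum_(i' < N) dY (g i i') (h (s i) (s i')) `^ p.

Arguments Gfun {R X Y}.
Arguments Ffun {R A Y}.

Lemma gospa2E (R : realType) (X Y : Type) (dX : X -> X -> R) (dY : Y -> Y -> R)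
    (y0 : Y) (p C2 : R) (m n : nat) (v : nat -> X) (e : nat -> nat -> Y)
    (w : nat -> X) (f : nat -> nat -> Y) :
  gospa2 dX dY y0 p C2 m n v e w f = n%:R `^ (- p^-1) *
    (\big[Num.min/Gfun dX dY y0 p C2 m n v e w f 1%g]_(s : 'S_n)
      Gfun dX dY y0 p C2 m n v e w f s) `^ p^-1.
Proof. by []. Qed.

Lemma DgraphE (R : realType) (A Y : Type) (dA : A -> A -> R) (dY : Y -> Y -> R)
    (p : R) (N : nat) (a : nat -> A) (g : nat -> nat -> Y)
    (b : nat -> A) (h : nat -> nat -> Y) :
  Dgraph dA dY p N a g b h = N%:R `^ (- p^-1) *
    (\big[Num.min/Ffun dA dY p N a g b h 1%g]_(s : 'S_N) Ffun dA dY p N a g b h s) `^ p^-1.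
Proof. by []. Qed.
Lemma main_claim (R : realType) (X Y : Type) (dX : X -> X -> R) (dY : Y -> Y -> R)
    (y0 : Y) (p CX CY C2 : R) (m n l : nat)
    (v : nat -> X) (e : nat -> nat -> Y) (w : nat -> X) (f : nat -> nat -> Y) :
  pseudometric dX -> pseudometric dY -> 0 <= CX -> 0 <= CY -> 0 <= C2 ->
  (forall x x', dX x x' <= CX) -> (forall y y', dY y y' <= CY) ->
  1 <= p -> CX `^ p + CY `^ p <= C2 `^ p ->
  (forall y1 y2, dY y1 y2 `^ p <= dY y1 y0 `^ p + dY y0 y2 `^ p) ->
  (m <= n)%N -> (n <= l)%N -> (0 < n)%N ->
  (forall i, (i < m)%N -> e i i = y0) ->
  (forall i, (i < n)%N -> f i i = y0) ->
  forall t : 'S_l, exists s : 'S_n,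
   l%:R * (Gfun dX dY y0 p C2 m n v e w f s - (n - m)%:R * CY `^ p) <=
   n%:R * Ffun (dXext dX p C2 CY) dY p l (ext_v m v XStar) (ext_e m y0 e)
     (ext_v n w XStar') (ext_e n y0 f) t.
Proof.
move=> pX pY CX0 CY0 C20 hX hY p1 hC tri mn nl n0 ed fd t.
have p0 : p != 0 by apply/eqP => e0; move: p1; rewrite e0; lra.
have pp : 0 <= p by lra.
set K := CY `^ p; set C := C2 `^ p; set c := C - K.
have K0 : 0 <= K := powR_ge0 _ _.
have CX0p : 0 <= CX `^ p := powR_ge0 _ _.
have CXc : CX `^ p <= c by rewrite /c /K /C; lra.
have c0 : 0 <= c by lra.
have dxc : forall x x', dX x x' `^ p <= c.
  by move=> x x'; apply: le_trans (powR_mono pp (pm_ge0 pX _ _) (hX _ _)) CXc.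
have dyK : forall y y', dY y y' `^ p <= K.
  by move=> y y'; apply: (powR_mono pp (pm_ge0 pY _ _) (hY _ _)).
have [rho [sg [rinj sgE rA rB]]] := induce_perm n l t nl.
exists sg.
have l0 : (0 < l)%N := leq_trans n0 nl.
pose d0 : 'I_n := Ordinal n0. pose e0 : 'I_l := Ordinal l0.
pose pn k := val (t (insubd e0 k)).
pose sn k := val (sg (insubd d0 k)).
pose rn k := val (rho (insubd d0 k)).
have F1 : forall i : 'I_l, val (t i) = pn i by move=> i; rewrite /pn valKd.
have F2 : forall i : 'I_n, val (sg i) = sn i by move=> i; rewrite /sn valKd.
have F3 : forall k, sn k = pn (rn k) by move=> k; rewrite /sn sgE /pn /rn valKd.
have wid : forall k, (k < n)%N -> widen_ord nl (insubd d0 k) = insubd e0 k.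
  by move=> k hk; apply: val_inj; rewrite /= !insubdK //; exact: (leq_trans hk nl).
have F4 : forall k, (k < n)%N -> (pn k < n)%N -> rn k = k.
  move=> k hk hp; rewrite /rn rA ?wid //= insubdK //; exact: (leq_trans hk nl).
have F5 : forall k, (k < n)%N -> ~~ (pn k < n)%N -> (n <= rn k)%N.
  by move=> k hk hp; rewrite /rn rB ?wid.
have F7 : forall k, (sn k < n)%N by move=> k; rewrite /sn ltn_ord.
have F8 : (\sum_(i < l) (if (i < n)%N && (n <= pn i)%N then 1 else 0) =
           \sum_(i < l) (if (n <= i)%N && (pn i < n)%N then 1 else 0))%N.
  have := card_BC l n t; rewrite !card_sum => h.
  rewrite (eq_bigr (fun i : 'I_l => if (i < n)%N && (n <= t i)%N then 1 else 0)%N);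
    last by move=> i _; rewrite F1.
  rewrite h; apply: eq_bigr => i _; by rewrite F1.
rewrite /Gfun /Ffun.
set E := \sum_(i < n) \sum_(i' < n)
   dY (ext_e m y0 e i i') (ext_e n y0 f (sn i) (sn i')) `^ p.
have eGe : (\sum_(i < n) \sum_(i' < n | (i < m)%N && (i' < m)%N)
          dY (e i i') (f (sg i) (sg i')) `^ p +
    \sum_(i < n) \sum_(i' < n | ~~ ((i < m)%N && (i' < m)%N))
          dY y0 (f (sg i) (sg i')) `^ p) = E.
  rewrite /E -big_split; apply: eq_bigr => i _.
  rewrite (big_mkcond (fun i' : 'I_n => (i < m)%N && (i' < m)%N))
     (big_mkcond (fun i' : 'I_n => ~~ ((i < m)%N && (i' < m)%N))) -big_split.
  apply: eq_bigr => i' _ /=.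
  rewrite !F2 /ext_e !F7 /=; case: ifP => _ /=; by rewrite ?addr0 ?add0r.
have eGv : \sum_(i < n | (i < m)%N) dX (v i) (w (sg i)) `^ p =
     \sum_(i < n | (i < m)%N) dX (v i) (w (sn i)) `^ p.
  by apply: eq_bigr => i _; rewrite F2.
pose T := fun i : nat => if (i < m)%N then dX (v i) (w (sn i)) `^ p else c.
have eT : \sum_(i < n) T i =
    \sum_(i < n | (i < m)%N) dX (v i) (w (sn i)) `^ p + (n - m)%:R * c.
  have -> : \sum_(i < n) T i =
      \sum_(i < n) (if (i < m)%N then dX (v i) (w (sn i)) `^ p else 0)
      + \sum_(i < n) (if (i < m)%N then 0 else c).
    rewrite -big_split; apply: eq_bigr => i _; rewrite /T.
    by case: ifP => _ /=; rewrite ?addr0 ?add0r.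
  rewrite -big_mkcond; congr (_ + _).
  rewrite -(big_mkord xpredT (fun i => if (i < m)%N then 0 else c)).
  rewrite (@big_cat_nat _ _ _ m 0 n _ _ (leq0n m) mn) /=.
  rewrite big_nat_cond big1 ?add0r; last by move=> i /andP [/andP [_ ->]].
  rewrite big_nat_cond (eq_bigr (fun => c)); last first.
    by move=> i /andP [/andP [h _] _]; rewrite ltnNge h.
  by rewrite -big_nat_cond sumr_const_nat mulr_natl.
set V' := \sum_(i < l) dXext dX p C2 CY (ext_v m v XStar i) (ext_v n w XStar' (t i)) `^ p.
have eFv : V' = \sum_(i < l)
    dXext dX p C2 CY (ext_v m v XStar i) (ext_v n w XStar' (pn i)) `^ p.
  by apply: eq_bigr => i _; rewrite F1.
set E' := \sum_(i < l) \sum_(i' < l) dY (ext_e m y0 e i i') (ext_e n y0 f (t i) (t i')) `^ p.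
have eFe : E' = \sum_(i < l) \sum_(i' < l)
    dY (ext_e m y0 e i i') (ext_e n y0 f (pn i) (pn i')) `^ p.
  by apply: eq_bigr => i _; apply: eq_bigr => i' _; rewrite !F1.
rewrite eGe eGv -/C.
have VV : \sum_(i < n) T i + (l - n)%:R * C <= V'.
  rewrite eFv.
  apply: le_trans (_ : \sum_(i < l) ((if (i < n)%N then T i else C) +
      K * ((if (i < n)%N && (n <= pn i)%N then 1 else 0)%N%:R
         - (if (n <= i)%N && (pn i < n)%N then 1 else 0)%N%:R)) <= _).
    rewrite big_split /= -mulr_sumr sumrB -!natr_sum F8 subrr mulr0 addr0.
    rewrite -(big_mkord xpredT (fun i => if (i < n)%N then T i else C)).
    rewrite (@big_cat_nat _ _ _ n 0 l _ _ (leq0n n) nl) /=.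
    rewrite (eq_big_nat _ _ (F2 := T)); last by move=> i /andP [_ ->].
    rewrite [X in _ <= _ + X](eq_big_nat _ _ (F2 := fun => C)); last first.
      by move=> i /andP [h _]; rewrite ltnNge h.
    by rewrite sumr_const_nat big_mkord mulr_natl.
  apply: ler_sum => i _.
  have Tc : forall k, T k <= c by move=> k; rewrite /T; case: ifP => _ //.
  rewrite /ext_v.
  case hi: (i < n)%N; case hp: (pn i < n)%N => /=.
  - have e1 : sn i = pn i by rewrite F3 F4.
    rewrite leqNgt hp (leqNgt n i) hi /= ?mulr0n subrr mulr0 addr0 /T e1.
    case: ifP => _ /=; first by rewrite lexx.
    by rewrite powRK1 // lexx.
  - rewrite leqNgt hp (leqNgt n i) hi /= mulr1n mulr0n subr0 mulr1.
    have := Tc i.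
    have -> : dXext dX p C2 CY (if (i < m)%N then XIn (v i) else XStar) XStar' = C2.
      by case: ifP.
    rewrite -/C /c; lra.
  - have im : (i < m)%N = false.
      by apply/negbTE; rewrite -leqNgt (leq_trans mn) // leqNgt hi.
    rewrite im leqNgt hi /= mulr1n mulr0n sub0r powRK1 // -/C -/K; lra.
  - have im : (i < m)%N = false.
      by apply/negbTE; rewrite -leqNgt (leq_trans mn) // leqNgt hi.
    by rewrite im andbF /= ?mulr0n subrr mulr0 addr0 -/C lexx.
have EE : E <= E'.
  rewrite eFe.
  have Fge0 : forall k k', 0 <= dY (ext_e m y0 e k k') (ext_e n y0 f (pn k) (pn k')) `^ p.
    by move=> ? ?; apply: powR_ge0.
  have rnE : forall i : 'I_n, rn i = rho i by move=> i; rewrite /rn valKd.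
  have Qr : forall j, (j < n)%N -> (pn (rn j) < n)%N by move=> j _; rewrite -F3.
  apply: le_trans (@edge_charge R n l
    (fun k k' => dY (ext_e m y0 e k k') (ext_e n y0 f (pn k) (pn k')) `^ p)
    (fun k => (pn k < n)%N) rn rho nl Fge0 rinj rnE Qr).
  rewrite /E -big_split /=; apply: ler_sum => k _.
  rewrite -big_split /=; apply: ler_sum => k' _ /=.
  rewrite !F3.
  case: ifP => [/andP [q1 q2]|nq].
    by rewrite add0r (F4 k) ?ltn_ord // (F4 k') ?ltn_ord // lexx.
  have hy : ext_e n y0 f (pn k) (pn k') = y0 by rewrite /ext_e nq.
  have gy : ext_e m y0 e (rn k) (rn k') = y0.
    rewrite /ext_e; case: ifP => // /andP [a1 a2]; exfalso.
    move: nq; case: (boolP (pn k < n)%N) => hk /=.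
      move=> hk'; move: (F5 _ (ltn_ord k') (negbT hk')).
      by rewrite leqNgt (leq_trans a2 mn).
    move=> _; move: (F5 _ (ltn_ord k) hk).
    by rewrite leqNgt (leq_trans a1 mn).
  rewrite hy gy; exact: tri.
have EK : E <= n%:R * (n - 1)%:R * K.
  apply: le_trans (_ : \sum_(k < n) \sum_(k' < n) (if k == k' then 0 else K) <= _).
    apply: ler_sum => k _; apply: ler_sum => k' _.
    case: eqP => [<-|_]; last exact: dyK.
    have g0 : ext_e m y0 e k k = y0.
      by rewrite /ext_e; case: ifP => // /andP [h _]; rewrite ed.
    have h0 : ext_e n y0 f (sn k) (sn k) = y0 by rewrite /ext_e F7 /= fd.
    by rewrite g0 h0 (pm_refl pY) powR0.
  rewrite (eq_bigr (fun _ => (n - 1)%:R * K)); last first.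
    move=> k _; rewrite (bigD1 k) //= eqxx add0r.
    rewrite (eq_bigr (fun _ => K)); last by move=> k' /negbTE; rewrite eq_sym => ->.
    rewrite sumr_const cardC1 card_ord mulr_natl subn1 //.
  by rewrite sumr_const card_ord -[_ *+ n]mulr_natl mulrA.
have E0 : 0 <= E.
  by apply: sumr_ge0 => i _; apply: sumr_ge0 => i' _; apply: powR_ge0.
have VT : \sum_(i < n) T i <= n%:R * (C - K).
  apply: le_trans (_ : \sum_(i < n) c <= _).
    by apply: ler_sum => i _; rewrite /T; case: ifP => _ //.
  by rewrite sumr_const card_ord mulr_natl.
have -> : (n - m)%:R * C + \sum_(i < n | (i < m)%N) dX (v i) (w (sn i)) `^ p +
   (2 * (n - 1)%:R)^-1 * E - (n - m)%:R * K =
   \sum_(i < n) T i + (2 * (n - 1)%:R)^-1 * E.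
  by rewrite eT /c; ring.
exact: (@alg_ineq _ _ _ _ _ _ _ _ _ n0 nl VT E0 EK EE VV K0).
Qed.
Theorem lemmaD (R : realType) (X Y : Type) (dX : X -> X -> R) (dY : Y -> Y -> R)
    (y0 : Y) (p CX CY C2 : R) (m n l : nat)
    (v : nat -> X) (e : nat -> nat -> Y) (w : nat -> X) (f : nat -> nat -> Y) :
  pseudometric dX -> pseudometric dY ->
  0 <= CX -> 0 <= CY -> 0 <= C2 ->
  (forall x x', dX x x' <= CX) -> (forall y y', dY y y' <= CY) ->
  1 <= p -> CX `^ p + CY `^ p <= C2 `^ p ->
  (p = 1 \/ (1 < p /\ forall y1 y2, dY y1 y2 <= Num.max (dY y1 y0) (dY y0 y2))) ->
  (m <= n)%N -> (n <= l)%N -> (1 <= n)%N ->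
  (forall i i', (i < m)%N -> (i' < m)%N -> e i i' = e i' i) ->
  (forall i, (i < m)%N -> e i i = y0) ->
  (forall i i', (i < n)%N -> (i' < n)%N -> f i i' = f i' i) ->
  (forall i, (i < n)%N -> f i i = y0) ->
  gospa2 dX dY y0 p C2 m n v e w f <=
  (Dgraph (dXext dX p C2 CY) dY p l
      (ext_v m v XStar) (ext_e m y0 e) (ext_v n w XStar') (ext_e n y0 f) `^ p
   + CY `^ p * ((n - m)%:R / n%:R)) `^ p^-1.
Proof.
move=> pX pY CX0 CY0 C20 hX hY p1 hC hp mn nl n0 esym ed fsym fd.
rewrite gospa2E DgraphE.
have tri := @tri_pow _ _ _ _ _ pY p1 hp.
have n2 : (0 : R) <= (2 * (n - 1)%:R)^-1 by rewrite invr_ge0 mulr_ge0 // ler0n.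
have l2 : (0 : R) <= (2 * (l - 1)%:R)^-1 by rewrite invr_ge0 mulr_ge0 // ler0n.
apply: final_pow => //.
- move=> s; rewrite /Gfun.
  apply: addr_ge0; first apply: addr_ge0.
  + by apply: mulr_ge0; [rewrite ler0n | apply: powR_ge0].
  + by apply: sumr_ge0 => i _; apply: powR_ge0.
  + apply: mulr_ge0 => //; apply: addr_ge0;
    by apply: sumr_ge0 => i _; apply: sumr_ge0 => i' _; apply: powR_ge0.
- move=> t; rewrite /Ffun; apply: addr_ge0.
  + by apply: sumr_ge0 => i _; apply: powR_ge0.
  + apply: mulr_ge0 => //.
    by apply: sumr_ge0 => i _; apply: sumr_ge0 => i' _; apply: powR_ge0.
- by apply: mulr_ge0; [rewrite ler0n | apply: powR_ge0].
- exact: (@main_claim R X Y dX dY y0 p CX CY C2 m n l v e w f pX pY CX0 CY0 C20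
           hX hY p1 hC tri mn nl n0 ed fd).
Qed.
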